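(* Let $(\Phi,\mathtt{Prg},\mathrm{AT})$ be a CLC SPL with feature model $\Phi=(\mathcal F,\phi)$, and let $p\subseteq\mathcal F$ be a valid product, i.e. $p\models\phi$. If $\phi\vdash \mathtt{Prg}\ \textsc{ok}$ (family-based typing), then $\vdash [\![\mathtt{Prg}]\!]_p\ \textsc{ok}$ (LC typing), i.e. the variant identified by $p$ is a well-typed LC program.
   Context: **Lightweight C (LC).** Types: $T ::= \mathtt{int}\mid \mathtt{void}* \mid \mathtt{struct}\ s*$ ($s$ a struct name). Expressions: $e ::= n$ (integer literal) $\mid \mathtt{NULL}\mid x$ (parameter name) $\mid f(e_1,\dots,e_k)$ ($k\ge0$) $\mid e\texttt{->}m \mid e\texttt{->}m=e \mid e\,?\,e:e \mid (e_1,\dots,e_k)$ ($k\ge1$, a parenthesized expression sequence) $\mid \mathsf{uop}\ e\mid e\ \mathsf{bop}\ e\mid \mathtt{MALLOC}(\mathtt{struct}\ s)\mid \mathtt{MFREE}(e)$. A struct definition is $\mathtt{struct}\ s\{T_1\,m_1;\dots;T_k\,m_k;\};$ (distinct member names); a function definition is $T_0\ f(T_1\,x_1,\dots,T_k\,x_k)\{\mathtt{return}\ e;\}$ (distinct parameter names); a program $\mathtt{Prg}=\overline{SD}\ \overline{FD}$ is a sequence of struct definitions followed by a sequence of function definitions, with distinct struct names and distinct function names. $\mathtt{Prg}$ is regarded as a finite map: $\mathtt{Prg}(s)$ is the definition of struct $s$, $\mathtt{Prg}(s)(m)=$ ''$T\ m$'' is the declaration of member $m$ in it, $\mathtt{Prg}(f)$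 is the definition of function $f$; $\mathrm{dom}(\overline{SD})$ is the set of defined struct names and $\mathrm{dom}(\mathtt{Prg})$ the set of defined struct and function names. $\mathtt{Prg}$ is *sane* if (1) every struct name occurring anywhere in $\mathtt{Prg}$ is defined in $\mathtt{Prg}$, (2) every function name occurring in the function definitions is defined in $\mathtt{Prg}$, (3) $\mathtt{Prg}(\mathtt{main})=\mathtt{int\ main}()\{\mathtt{return}\ e;\}$ for some $e$. Operator types: unary $-:(\mathtt{int})\to\mathtt{int}$; unary $!:(T)\to\mathtt{int}$ for every type $T$; binary $+,-,*,/,\&\&,||,<,<=,>,>=:(\mathtt{int},\mathtt{int})\to\mathtt{int}$; binary $==,!=:(T,T)\to\mathtt{int}$ for every type $T$. Subtyping $\le$ is the reflexive closure of $\mathtt{void}*\le\mathtt{struct}\ s*$ for every struct $s$ defined in the program; $\max_\le\{T_1,T_2\}$ is the greater of two $\le$-comparable types. LC typing (relative to the program under consideration; $\Gamma$ a finite map from parameter names to types): (T-prg) if $\mathtt{Prg}$ is sane, $\mathtt{Prg}=\overline{SD}\,\overline{FD}$ and $\vdash FD\ \textsc{ok}$ for every $FD$ in $\overline{FD}$, then $\vdash\mathtt{Prg}\ \textsc{ok}$. (T-fun) if $x_1{:}T_1,\dots,x_k{:}T_k\vdash e:T'$ and $T'\le T_0$ then $\vdash T_0\,f(T_1x_1,\dots,T_kx_k)\{\mathtt{return}\ e;\}\ \textsc{ok}$. (T-int) $\Gamma\vdash n:\mathtt{int}$. (T-null) $\Gamma\vdash\mathtt{NULL}:\mathtt{void}*$.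 (T-par) if $x{:}T\in\Gamma$ then $\Gamma\vdash x:T$. (T-app) if $\mathtt{Prg}(f)=T_0\,f(T_1x_1,\dots,T_kx_k)\{\dots\}$, and $\Gamma\vdash e_i:T_i'$, $T_i'\le T_i$ for $i=1..k$ (exactly $k$ arguments), then $\Gamma\vdash f(e_1,\dots,e_k):T_0$. (T-member) if $\Gamma\vdash e_0:\mathtt{struct}\ s*$ and $\mathtt{Prg}(s)(m)=T\,m$ then $\Gamma\vdash e_0\texttt{->}m:T$. (T-assign) if additionally $\Gamma\vdash e_1:T_1$, $T_1\le T$, then $\Gamma\vdash e_0\texttt{->}m=e_1:T$. (T-cond) if $\Gamma\vdash e_j:T_j$ ($j=0,1,2$) and $T_3=\max_\le\{T_1,T_2\}$ then $\Gamma\vdash e_0?e_1:e_2:T_3$. (T-seq) if $\Gamma\vdash e_i:T_i$ for $i=1..n$ then $\Gamma\vdash(e_1,\dots,e_n):T_n$. (T-uop) if $\Gamma\vdash e_0:T_0$ and $\mathsf{uop}$ has type $(T_0)\to\mathtt{int}$ then $\Gamma\vdash\mathsf{uop}\,e_0:\mathtt{int}$. (T-bop) if $\Gamma\vdash e_1:T_1$, $\Gamma\vdash e_2:T_2$, $T_3=\max_\le\{T_1,T_2\}$ and $\mathsf{bop}$ has type $(T_3,T_3)\to\mathtt{int}$ then $\Gamma\vdash e_1\,\mathsf{bop}\,e_2:\mathtt{int}$. (T-malloc) if $s\in\mathrm{dom}(\overline{SD})$ then $\Gamma\vdash\mathtt{MALLOC}(\mathtt{struct}\ s):\mathtt{struct}\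 s*$. (T-mfree) if $\Gamma\vdash e_0:\mathtt{struct}\ s*$ then $\Gamma\vdash\mathtt{MFREE}(e_0):\mathtt{void}*$. **Colored LC (CLC).** A feature model $\Phi=(\mathcal F,\phi)$: $\mathcal F$ a finite set of features, $\phi$ a propositional formula over $\mathcal F$ (connectives $!,\&\&,||$, constants $0,1$). A product is $p\subseteq\mathcal F$; $p\models\psi$ means $\psi$ is true under the assignment giving 1 to features in $p$ and 0 to the others; $p$ is valid if $p\models\phi$. For formulas, $\theta\models\theta'$ means $\theta\Rightarrow\theta'$ is valid; $\psi_1\Rightarrow\psi_2$ abbreviates $!\psi_1||\psi_2$ and $\psi_1\Leftrightarrow\psi_2$ the conjunction of both implications. An SPL is a triple $(\Phi,\mathtt{Prg},\mathrm{AT})$ with $\mathtt{Prg}$ an LC program (the code base) and $\mathrm{AT}$ an annotation table assigning a propositional formula over $\mathcal F$ to each occurrence of an annotable fragment of $\mathtt{Prg}$; annotable fragments are: each struct definition, each member declaration $T\,m$, each function definition, each formal parameter declaration $T\,x$, each argument of a function call, and each element of a parenthesized sequence. Occurrences not explicitly annotated have annotation $1$. Abbreviations: $\mathrm{AT}(s)=\mathrm{AT}(\mathtt{Prg}(s))$ is the annotation of the definition of struct $s$, $\mathrm{AT}(f)=\mathrm{AT}(\mathtt{Prg}(f))$ that of function $f$; $\mathrm{AT}(\mathtt{int})=\mathrm{AT}(\mathtt{void}* )=1$, $\mathrm{AT}(\mathtt{struct}\ s* )=\mathrm{AT}(\mathtt{Prg}(s))$; for equal-length sequences, $\mathrm{AT}(\bar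 a)\odot\mathrm{AT}(\bar b)$ ($\odot\in\{\Rightarrow,\Leftrightarrow\}$) is the conjunction of $\mathrm{AT}(a_i)\odot\mathrm{AT}(b_i)$; $\exists(e_1,\dots,e_n)=\mathrm{AT}(e_1)||\cdots||\mathrm{AT}(e_n)$; $\mathtt{neverLast}(k,(e_1,\dots,e_n))=\,!\mathrm{AT}(e_k)||\mathrm{AT}(e_{k+1})||\cdots||\mathrm{AT}(e_n)$. An annotated type environment $\Delta$ maps parameter names to pairs written $x{:}T$ with $\psi$ ($T$ a type, $\psi$ a formula). Family-based typing of $(\Phi,\mathtt{Prg},\mathrm{AT})$: (FT-prg) if $\mathtt{Prg}$ is sane, $\mathrm{AT}(\mathtt{main})=1$, $\mathtt{Prg}=\overline{SD}\,\overline{FD}$, $\phi\,\&\&\,\mathrm{AT}(SD)\vdash SD\ \textsc{ok}$ for each $SD$ in $\overline{SD}$ and $\phi\,\&\&\,\mathrm{AT}(FD)\vdash FD\ \textsc{ok}$ for each $FD$ in $\overline{FD}$, then $\phi\vdash\mathtt{Prg}\ \textsc{ok}$. (FT-struct) if $\theta\models\mathrm{AT}(T_i\,m_i)\Rightarrow\mathrm{AT}(T_i)$ for all $i$, then $\theta\vdash\mathtt{struct}\ s\{T_1m_1;\dots;T_km_k;\}\ \textsc{ok}$. (FT-fun) if $\theta\models\mathrm{AT}(T_0)$, $\theta\models\mathrm{AT}(T_i\,x_i)\Rightarrow\mathrm{AT}(T_i)$ for all $i$, $\theta;\ x_1{:}T_1\text{ with }\mathrm{AT}(T_1x_1),\dots,x_k{:}T_k\text{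 with }\mathrm{AT}(T_kx_k)\vdash e:T'$ and $T'\le T_0$, then $\theta\vdash T_0\,f(T_1x_1,\dots,T_kx_k)\{\mathtt{return}\ e;\}\ \textsc{ok}$. (FT-int) $\theta;\Delta\vdash n:\mathtt{int}$. (FT-null) $\theta;\Delta\vdash\mathtt{NULL}:\mathtt{void}*$. (FT-par) if $x{:}T$ with $\psi$ is in $\Delta$ and $\theta\models\psi$ then $\theta;\Delta\vdash x:T$. (FT-app) if $\mathtt{Prg}(f)=T_0\,f(T_1x_1,\dots,T_kx_k)\{\dots\}$, $\theta\models\mathrm{AT}(\mathtt{Prg}(f))$, and for $i=1..k$ (exactly $k$ arguments) $\theta;\Delta\vdash e_i:T_i'$, $T_i'\le T_i$ and $\theta\models\mathrm{AT}(e_i)\Leftrightarrow\mathrm{AT}(T_ix_i)$, then $\theta;\Delta\vdash f(e_1,\dots,e_k):T_0$. (FT-member) if $\theta;\Delta\vdash e_0:\mathtt{struct}\ s*$, $\mathtt{Prg}(s)(m)=T\,m$ and $\theta\models\mathrm{AT}(T\,m)$ then $\theta;\Delta\vdash e_0\texttt{->}m:T$. (FT-assign) if additionally $\theta;\Delta\vdash e_1:T_1$ and $T_1\le T$ then $\theta;\Delta\vdash e_0\texttt{->}m=e_1:T$. (FT-cond), (FT-uop), (FT-bop), (FT-mfree): as T-cond, T-uop, T-bop, T-mfree with every judgment $\Gamma\vdash$ replaced by $\theta;\Delta\vdash$. (FT-seq) if $\theta\models\exists(e_1,\dots,e_n)$, $\theta\,\&\&\,\mathrm{AT}(e_i);\Delta\vdash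 e_i:T_i$ for all $i$, $T=T_n$, and $\theta\models\mathtt{neverLast}(i,(e_1,\dots,e_n))$ for every $i$ with $T_i\ne T$, then $\theta;\Delta\vdash(e_1,\dots,e_n):T$. (FT-malloc) if $s\in\mathrm{dom}(\overline{SD})$ and $\theta\models\mathrm{AT}(\mathtt{Prg}(s))$ then $\theta;\Delta\vdash\mathtt{MALLOC}(\mathtt{struct}\ s):\mathtt{struct}\ s*$. **Variant generation.** For a product $p$ and a sequence of annotable occurrences: $[\![\,]\!]_p$ is empty; $[\![a_1\dots a_n]\!]_p=\langle\!\langle a_1\rangle\!\rangle_p\,[\![a_2\dots a_n]\!]_p$ if $p\models\mathrm{AT}(a_1)$, and $=[\![a_2\dots a_n]\!]_p$ otherwise. $\langle\!\langle\mathtt{struct}\ s\{\overline{T\,m};\}\rangle\!\rangle_p=\mathtt{struct}\ s\{[\![\overline{T\,m}]\!]_p\}$; $\langle\!\langle T_0f(\overline{T\,x})\{\mathtt{return}\ e;\}\rangle\!\rangle_p=T_0f([\![\overline{T\,x}]\!]_p)\{\mathtt{return}\ \langle\!\langle e\rangle\!\rangle_p;\}$; $\langle\!\langle T\,m\rangle\!\rangle_p=T\,m$, $\langle\!\langle T\,x\rangle\!\rangle_p=T\,x$; $\langle\!\langle f(\bar e)\rangle\!\rangle_p=f([\![\bar e]\!]_p)$; $\langle\!\langle(\tilde e)\rangle\!\rangle_p=([\![\tilde e]\!]_p)$; on all other expression forms $\langle\!\langle\cdot\rangle\!\rangle_p$ acts homomorphically on immediate subexpressions ($n$, $\mathtt{NULL}$,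 $x$, $\mathtt{MALLOC}(\mathtt{struct}\ s)$ unchanged). The variant is $[\![\mathtt{Prg}]\!]_p=[\![\overline{SD}]\!]_p\,[\![\overline{FD}]\!]_p$ for $\mathtt{Prg}=\overline{SD}\,\overline{FD}$. *)

(* Defs.v *)
From Stdlib Require Import ZArith String List.
From mathcomp Require Import ssreflect ssrbool eqtype choice fintype.
Import ListNotations.
Set Implicit Arguments.
Unset Strict Implicit.

Definition sname := string.
Definition mname := string.
Definition fname := string.
Definition pname := string.

Definition main_name : fname := "main"%string.

Inductive typ : Type :=
| TInt
| TVoidPtr
| TStructPtr (s : sname).

Inductive uop : Type := UNeg | UNot.
Inductive bop : Type :=
| BAdd | BSub | BMul | BDiv | BAnd | BOr | BLt | BLe | BGt | BGe | BEq | BNe.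

Definition uop_type (o : uop) (T : typ) : Prop :=
  match o with UNeg => T = TInt | UNot => True end.
Definition bop_type (o : bop) (T : typ) : Prop :=
  match o with BEq | BNe => True | _ => T = TInt end.

(* Syntax, parametrised by the type A of annotations carried by the
   annotable fragments.  LC programs are [prog unit]; the code base of a
   CLC SPL together with its annotation table is a [prog (formula F)]. *)
Section Syntax.
Variable A : Type.

Inductive expr : Type :=
| ENum (n : Z)
| ENull
| EPar (x : pname)
| EApp (f : fname) (args : list (A * expr))
| EMem (e : expr) (m : mname)
| EAssign (e0 : expr) (m : mname) (e1 : expr)
| ECond (e0 e1 e2 : expr)
| ESeq (es : list (A * expr))
| EUop (o : uop) (e : expr)
| EBop (o : bop) (e1 e2 : expr)
| EMalloc (s : sname)
| EFree (e : expr).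

Record sdef : Type := SDef {
  sd_ann : A;
  sd_name : sname;
  sd_mems : list (A * (typ * mname)) }.

Record fdef : Type := FDef {
  fd_ann : A;
  fd_ret : typ;
  fd_name : fname;
  fd_params : list (A * (typ * pname));
  fd_body : expr }.

Record prog : Type := Prog {
  p_structs : list sdef;
  p_funs : list fdef }.

Definition find_struct (P : prog) (s : sname) : option sdef :=
  find (fun d => String.eqb (sd_name d) s) (p_structs P).
Definition find_fun (P : prog) (f : fname) : option fdef :=
  find (fun d => String.eqb (fd_name d) f) (p_funs P).
Definition find_mem (d : sdef) (m : mname) : option (A * (typ * mname)) :=
  find (fun md => String.eqb (snd (snd md)) m) (sd_mems d).

Definition struct_defined (P : prog) (s : sname) : Prop :=
  In s (map sd_name (p_structs P)).
Definition fun_defined (P : prog) (f : fname) : Prop :=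
  In f (map fd_name (p_funs P)).

Definition names_ok (P : prog) : Prop :=
  NoDup (map sd_name (p_structs P)) /\
  NoDup (map fd_name (p_funs P)) /\
  Forall (fun d => NoDup (map (fun md => snd (snd md)) (sd_mems d))) (p_structs P) /\
  Forall (fun d => NoDup (map (fun pd => snd (snd pd)) (fd_params d))) (p_funs P).

Definition typ_structs (T : typ) : list sname :=
  match T with TStructPtr s => [s] | _ => [] end.

Fixpoint expr_mallocs (e : expr) : list sname :=
  match e with
  | ENum _ | ENull | EPar _ => []
  | EApp _ args =>
      (fix go (l : list (A * expr)) : list sname :=
         match l with [] => [] | (_, e') :: l' => expr_mallocs e' ++ go l' end) args
  | ESeq es =>
      (fix go (l : list (A * expr)) : list sname :=
         match l with [] => [] | (_, e') :: l' => expr_mallocs e' ++ go l' end) es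
  | EMem e0 _ => expr_mallocs e0
  | EAssign e0 _ e1 => expr_mallocs e0 ++ expr_mallocs e1
  | ECond e0 e1 e2 => expr_mallocs e0 ++ expr_mallocs e1 ++ expr_mallocs e2
  | EUop _ e0 => expr_mallocs e0
  | EBop _ e1 e2 => expr_mallocs e1 ++ expr_mallocs e2
  | EMalloc s => [s]
  | EFree e0 => expr_mallocs e0
  end.

Fixpoint expr_calls (e : expr) : list fname :=
  match e with
  | ENum _ | ENull | EPar _ | EMalloc _ => []
  | EApp f args =>
      f :: (fix go (l : list (A * expr)) : list fname :=
         match l with [] => [] | (_, e') :: l' => expr_calls e' ++ go l' end) args
  | ESeq es =>
      (fix go (l : list (A * expr)) : list fname :=
         match l with [] => [] | (_, e') :: l' => expr_calls e' ++ go l' end) es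
  | EMem e0 _ => expr_calls e0
  | EAssign e0 _ e1 => expr_calls e0 ++ expr_calls e1
  | ECond e0 e1 e2 => expr_calls e0 ++ expr_calls e1 ++ expr_calls e2
  | EUop _ e0 => expr_calls e0
  | EBop _ e1 e2 => expr_calls e1 ++ expr_calls e2
  | EFree e0 => expr_calls e0
  end.

Definition sdef_structs (d : sdef) : list sname :=
  sd_name d :: flat_map (fun md => typ_structs (fst (snd md))) (sd_mems d).
Definition fdef_structs (d : fdef) : list sname :=
  typ_structs (fd_ret d) ++ flat_map (fun pd => typ_structs (fst (snd pd))) (fd_params d)
  ++ expr_mallocs (fd_body d).
Definition prog_structs (P : prog) : list sname :=
  flat_map sdef_structs (p_structs P) ++ flat_map fdef_structs (p_funs P).
Definition prog_calls (P : prog) : list fname :=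
  flat_map (fun d => fd_name d :: expr_calls (fd_body d)) (p_funs P).

Definition sane (P : prog) : Prop :=
  (forall s, In s (prog_structs P) -> struct_defined P s) /\
  (forall f, In f (prog_calls P) -> fun_defined P f) /\
  (exists d, find_fun P main_name = Some d /\ fd_ret d = TInt /\ fd_params d = []).

Definition subty (P : prog) (T1 T2 : typ) : Prop :=
  T1 = T2 \/ (T1 = TVoidPtr /\ exists s, T2 = TStructPtr s /\ struct_defined P s).

Definition tmax (P : prog) (T1 T2 T3 : typ) : Prop :=
  (subty P T1 T2 /\ T3 = T2) \/ (subty P T2 T1 /\ T3 = T1).

End Syntax.

Arguments ENum {A} n.
Arguments ENull {A}.
Arguments EPar {A} x.
Arguments EMalloc {A} s.

Definition lexpr := expr unit.
Definition lprog := prog unit.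

Inductive lc_ty (P : lprog) (G : list (pname * typ)) : lexpr -> typ -> Prop :=
| T_int n : lc_ty P G (ENum n) TInt
| T_null : lc_ty P G ENull TVoidPtr
| T_par x T : In (x, T) G -> lc_ty P G (EPar x) T
| T_app f d args Ts :
    find_fun P f = Some d ->
    Forall2 (fun a T' => lc_ty P G (snd a) T') args Ts ->
    Forall2 (fun T' pd => subty P T' (fst (snd pd))) Ts (fd_params d) ->
    lc_ty P G (EApp f args) (fd_ret d)
| T_member e0 s m sd a T m' :
    lc_ty P G e0 (TStructPtr s) ->
    find_struct P s = Some sd -> find_mem sd m = Some (a, (T, m')) ->
    lc_ty P G (EMem e0 m) T
| T_assign e0 s m sd a T m' e1 T1 :
    lc_ty P G e0 (TStructPtr s) ->
    find_struct P s = Some sd -> find_mem sd m = Some (a, (T, m')) ->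
    lc_ty P G e1 T1 -> subty P T1 T ->
    lc_ty P G (EAssign e0 m e1) T
| T_cond e0 e1 e2 T0 T1 T2 T3 :
    lc_ty P G e0 T0 -> lc_ty P G e1 T1 -> lc_ty P G e2 T2 ->
    tmax P T1 T2 T3 -> lc_ty P G (ECond e0 e1 e2) T3
| T_seq es Ts :
    Forall2 (fun a T => lc_ty P G (snd a) T) es Ts ->
    Ts <> [] ->
    lc_ty P G (ESeq es) (last Ts TInt)
| T_uop o e0 T0 :
    lc_ty P G e0 T0 -> uop_type o T0 -> lc_ty P G (EUop o e0) TInt
| T_bop o e1 e2 T1 T2 T3 :
    lc_ty P G e1 T1 -> lc_ty P G e2 T2 -> tmax P T1 T2 T3 -> bop_type o T3 ->
    lc_ty P G (EBop o e1 e2) TInt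
| T_malloc s : struct_defined P s -> lc_ty P G (EMalloc s) (TStructPtr s)
| T_mfree e0 s : lc_ty P G e0 (TStructPtr s) -> lc_ty P G (EFree e0) TVoidPtr.

Definition lc_fun_ok (P : lprog) (d : fdef unit) : Prop :=
  exists T', lc_ty P (map (fun pd => (snd (snd pd), fst (snd pd))) (fd_params d))
                   (fd_body d) T' /\ subty P T' (fd_ret d).

Definition lc_prog_ok (P : lprog) : Prop :=
  sane P /\ Forall (lc_fun_ok P) (p_funs P).

Section Formulas.
Variable F : finType.

Inductive formula : Type :=
| FVar (f : F)
| FNot (a : formula)
| FAnd (a b : formula)
| FOr (a b : formula)
| FFalse
| FTrue.

(* a product p ⊆ F, given by its characteristic function *)
Fixpoint feval (p : F -> bool) (a : formula) : bool :=
  match a with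
  | FVar f => p f
  | FNot a => negb (feval p a)
  | FAnd a b => feval p a && feval p b
  | FOr a b => feval p a || feval p b
  | FFalse => false
  | FTrue => true
  end.

Definition entails (a b : formula) : Prop :=
  forall p : F -> bool, feval p a = true -> feval p b = true.

Definition fimp (a b : formula) : formula := FOr (FNot a) b.
Definition fiff (a b : formula) : formula := FAnd (fimp a b) (fimp b a).
Definition big_or (l : list formula) : formula := fold_right FOr FFalse l.

Definition fexists (es : list (formula * expr formula)) : formula :=
  big_or (map fst es).
(* neverLast(k,(e1..en)) = !AT(e_k) || AT(e_{k+1}) || ... || AT(e_n)  (0-based k) *)
Definition never_last (k : nat) (es : list (formula * expr formula)) : formula :=
  FOr (FNot (nth k (map fst es) FTrue)) (big_or (map fst (skipn (S k) es))).

End Formulas.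

Arguments FFalse {F}.
Arguments FTrue {F}.

Section FT.
Variable F : finType.
Notation fm := (formula F).
Definition cexpr := expr fm.
Definition cprog := prog fm.

Definition at_typ (P : cprog) (T : typ) : fm :=
  match T with
  | TStructPtr s => match find_struct P s with Some d => sd_ann d | None => FTrue end
  | _ => FTrue
  end.

Inductive ft_ty (P : cprog) (D : list (pname * (typ * fm))) : fm -> cexpr -> typ -> Prop :=
| FT_int th n : ft_ty P D th (ENum n) TInt
| FT_null th : ft_ty P D th ENull TVoidPtr
| FT_par th x T psi : In (x, (T, psi)) D -> entails th psi -> ft_ty P D th (EPar x) T
| FT_app th f d args Ts :
    find_fun P f = Some d ->
    entails th (fd_ann d) ->
    Forall2 (fun a T' => ft_ty P D th (snd a) T') args Ts ->
    Forall2 (fun T' pd => subty P T' (fst (snd pd))) Ts (fd_params d) ->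
    Forall2 (fun a pd => entails th (fiff (fst a) (fst pd))) args (fd_params d) ->
    ft_ty P D th (EApp f args) (fd_ret d)
| FT_member th e0 s m sd a T m' :
    ft_ty P D th e0 (TStructPtr s) ->
    find_struct P s = Some sd -> find_mem sd m = Some (a, (T, m')) ->
    entails th a ->
    ft_ty P D th (EMem e0 m) T
| FT_assign th e0 s m sd a T m' e1 T1 :
    ft_ty P D th e0 (TStructPtr s) ->
    find_struct P s = Some sd -> find_mem sd m = Some (a, (T, m')) ->
    entails th a ->
    ft_ty P D th e1 T1 -> subty P T1 T ->
    ft_ty P D th (EAssign e0 m e1) T
| FT_cond th e0 e1 e2 T0 T1 T2 T3 :
    ft_ty P D th e0 T0 -> ft_ty P D th e1 T1 -> ft_ty P D th e2 T2 ->
    tmax P T1 T2 T3 -> ft_ty P D th (ECond e0 e1 e2) T3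
| FT_seq th es Ts :
    entails th (fexists es) ->
    Forall2 (fun a T => ft_ty P D (FAnd th (fst a)) (snd a) T) es Ts ->
    Ts <> [] ->
    (forall i, i < length Ts -> nth i Ts TInt <> last Ts TInt ->
               entails th (never_last i es)) ->
    ft_ty P D th (ESeq es) (last Ts TInt)
| FT_uop th o e0 T0 :
    ft_ty P D th e0 T0 -> uop_type o T0 -> ft_ty P D th (EUop o e0) TInt
| FT_bop th o e1 e2 T1 T2 T3 :
    ft_ty P D th e1 T1 -> ft_ty P D th e2 T2 -> tmax P T1 T2 T3 -> bop_type o T3 ->
    ft_ty P D th (EBop o e1 e2) TInt
| FT_malloc th s sd :
    find_struct P s = Some sd -> entails th (sd_ann sd) ->
    ft_ty P D th (EMalloc s) (TStructPtr s)
| FT_mfree th e0 s : ft_ty P D th e0 (TStructPtr s) -> ft_ty P D th (EFree e0) TVoidPtr.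

Definition ft_struct_ok (P : cprog) (th : fm) (d : sdef fm) : Prop :=
  Forall (fun md => entails th (fimp (fst md) (at_typ P (fst (snd md))))) (sd_mems d).

Definition ft_fun_ok (P : cprog) (th : fm) (d : fdef fm) : Prop :=
  entails th (at_typ P (fd_ret d)) /\
  Forall (fun pd => entails th (fimp (fst pd) (at_typ P (fst (snd pd))))) (fd_params d) /\
  exists T', ft_ty P (map (fun pd => (snd (snd pd), (fst (snd pd), fst pd))) (fd_params d))
                   th (fd_body d) T' /\ subty P T' (fd_ret d).

Definition ft_prog_ok (phi : fm) (P : cprog) : Prop :=
  sane P /\
  (exists d, find_fun P main_name = Some d /\ fd_ann d = FTrue) /\
  Forall (fun d => ft_struct_ok P (FAnd phi (sd_ann d)) d) (p_structs P) /\
  Forall (fun d => ft_fun_ok P (FAnd phi (fd_ann d)) d) (p_funs P).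

Fixpoint var_expr (p : F -> bool) (e : cexpr) : lexpr :=
  match e with
  | ENum n => ENum n
  | ENull => ENull
  | EPar x => EPar x
  | EApp f args =>
      EApp f ((fix go (l : list (fm * cexpr)) : list (unit * lexpr) :=
                 match l with
                 | [] => []
                 | (a, e') :: l' => if feval p a then (tt, var_expr p e') :: go l' else go l'
                 end) args)
  | ESeq es =>
      ESeq ((fix go (l : list (fm * cexpr)) : list (unit * lexpr) :=
               match l with
               | [] => []
               | (a, e') :: l' => if feval p a then (tt, var_expr p e') :: go l' else go l'
               end) es)
  | EMem e0 m => EMem (var_expr p e0) m
  | EAssign e0 m e1 => EAssign (var_expr p e0) m (var_expr p e1)
  | ECond e0 e1 e2 => ECond (var_expr p e0) (var_expr p e1) (var_expr p e2)
  | EUop o e0 => EUop o (var_expr p e0)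
  | EBop o e1 e2 => EBop o (var_expr p e1) (var_expr p e2)
  | EMalloc s => EMalloc s
  | EFree e0 => EFree (var_expr p e0)
  end.

Definition var_decls {X : Type} (p : F -> bool) (l : list (fm * X)) : list (unit * X) :=
  map (fun ax => (tt, snd ax)) (filter (fun ax => feval p (fst ax)) l).

Definition var_struct (p : F -> bool) (d : sdef fm) : sdef unit :=
  SDef tt (sd_name d) (var_decls p (sd_mems d)).

Definition var_fun (p : F -> bool) (d : fdef fm) : fdef unit :=
  FDef tt (fd_ret d) (fd_name d) (var_decls p (fd_params d)) (var_expr p (fd_body d)).

Definition variant (p : F -> bool) (P : cprog) : lprog :=
  Prog (map (var_struct p) (filter (fun d => feval p (sd_ann d)) (p_structs P)))
       (map (var_fun p) (filter (fun d => feval p (fd_ann d)) (p_funs P))).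

End FT.

(* Main.v *)
Require Import Defs.
From Stdlib Require Import ZArith String List Bool Lia.
From mathcomp Require Import ssreflect ssrbool eqtype choice fintype.
Import ListNotations.
Set Implicit Arguments.
Unset Strict Implicit.

Lemma find_map_filter (X Y : Type) (g : X -> Y) (q k : X -> bool) (k' : Y -> bool) l x :
  (forall x, k' (g x) = k x) -> find k l = Some x -> q x = true ->
  find k' (map g (filter q l)) = Some (g x).
Proof.
  intros Hk. induction l as [|a l IH]; simpl; intros H Hq; [discriminate|].
  destruct (k a) eqn:E.
  - injection H as <-. rewrite Hq. simpl. rewrite Hk E. reflexivity.
  - destruct (q a); simpl; [rewrite Hk E|]; auto.
Qed.

Lemma find_of_in (X : Type) (k : X -> bool) l x :
  In x l -> k x = true -> exists y, find k l = Some y.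
Proof.
  intros Hin Hk. destruct (find k l) eqn:E; [eauto|].
  rewrite (find_none _ _ E x Hin) in Hk. discriminate.
Qed.

Definition tok (F : finType) (P : cprog F) (p : F -> bool) (T : typ) : Prop :=
  match T with
  | TStructPtr s => exists sd, find_struct P s = Some sd /\ feval p (sd_ann sd) = true
  | _ => True
  end.

Lemma find_struct_var F (P : cprog F) p s sd :
  find_struct P s = Some sd -> feval p (sd_ann sd) = true ->
  find_struct (variant p P) s = Some (var_struct p sd).
Proof. intros. unfold find_struct; simpl. eapply find_map_filter; [intros; reflexivity|eauto|eauto]. Qed.

Lemma find_fun_var F (P : cprog F) p f d :
  find_fun P f = Some d -> feval p (fd_ann d) = true ->
  find_fun (variant p P) f = Some (var_fun p d).
Proof. intros. unfold find_fun; simpl. eapply find_map_filter; [intros; reflexivity|eauto|eauto]. Qed.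

Lemma find_mem_var F p (sd : sdef (formula F)) m a T m' :
  find_mem sd m = Some (a, (T, m')) -> feval p a = true ->
  find_mem (var_struct p sd) m = Some (tt, (T, m')).
Proof.
  intros. unfold find_mem, var_struct, var_decls; simpl.
  change (tt, (T, m')) with ((fun ax : formula F * (typ * mname) => (tt, snd ax)) (a, (T, m'))).
  eapply find_map_filter; [intros; reflexivity|eauto|eauto].
Qed.

Lemma tok_defined F (P : cprog F) p s :
  tok P p (TStructPtr s) -> struct_defined (variant p P) s.
Proof.
  intros [sd [H1 H2]]. pose proof (find_struct_var H1 H2) as H.
  unfold find_struct in H. apply find_some in H as [Hin Heq].
  apply String.eqb_eq in Heq. unfold struct_defined. rewrite <- Heq.
  apply in_map. exact Hin.
Qed.

Lemma subty_lift F (P : cprog F) p T1 T2 :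
  subty P T1 T2 -> tok P p T2 -> subty (variant p P) T1 T2.
Proof.
  intros [H|[H1 [s [H2 H3]]]] Ht; [left; auto|].
  right. split; auto. exists s. split; auto. subst. apply tok_defined with (p:=p). exact Ht.
Qed.

Lemma tmax_lift F (P : cprog F) p T1 T2 T3 :
  tmax P T1 T2 T3 -> tok P p T1 -> tok P p T2 -> tmax (variant p P) T1 T2 T3 /\ tok P p T3.
Proof.
  intros [[H1 H2]|[H1 H2]] t1 t2; subst; split; auto.
  - left; split; auto. apply subty_lift; auto.
  - right; split; auto. apply subty_lift; auto.
Qed.

Lemma tok_of_at F (P : cprog F) p T :
  (forall s, T = TStructPtr s -> struct_defined P s) ->
  feval p (at_typ P T) = true -> tok P p T.
Proof.
  destruct T as [| |s]; simpl; auto. intros Hd Ha.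
  specialize (Hd s (@Logic.eq_refl _ _)). unfold struct_defined in Hd.
  apply in_map_iff in Hd as [sd [Hn Hin]].
  destruct (@find_of_in _ (fun d => String.eqb (sd_name d) s) _ _ Hin) as [y Hy].
  { apply String.eqb_eq; auto. }
  unfold find_struct in Ha |- *. rewrite Hy in Ha |- *. eauto.
Qed.

Lemma entails_feval F (th a : formula F) p :
  entails th a -> feval p th = true -> feval p a = true.
Proof. intros H; apply H. Qed.

Lemma fand_true F (th a : formula F) p :
  feval p th = true -> feval p a = true -> feval p (FAnd th a) = true.
Proof. simpl; intros -> ->; reflexivity. Qed.

Definition vl (F : finType) (p : F -> bool) (l : list (formula F * cexpr F)) : list (unit * lexpr) :=
  map (fun ae => (tt, var_expr p (snd ae))) (filter (fun ae => feval p (fst ae)) l).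

Lemma vl_cons F p (a : formula F) e l :
  vl p ((a, e) :: l) = if feval p a then (tt, var_expr p e) :: vl p l else vl p l.
Proof. unfold vl; simpl; destruct (feval p a); reflexivity. Qed.

Lemma var_app F p f (l : list (formula F * cexpr F)) :
  var_expr p (EApp f l) = EApp f (vl p l).
Proof.
  induction l as [|[a e] l IH]; [reflexivity|].
  rewrite vl_cons. simpl in IH |- *. injection IH as IH. rewrite IH. reflexivity.
Qed.

Lemma var_seq F p (l : list (formula F * cexpr F)) :
  var_expr p (ESeq l) = ESeq (vl p l).
Proof.
  induction l as [|[a e] l IH]; [reflexivity|].
  rewrite vl_cons. simpl in IH |- *. injection IH as IH. rewrite IH. reflexivity.
Qed.

Lemma mal_app A f (l : list (A * expr A)) :
  expr_mallocs (EApp f l) = flat_map (fun ae => expr_mallocs (snd ae)) l.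
Proof.
  induction l as [|[a e] l IH]; [reflexivity|]. simpl in IH |- *. rewrite IH. reflexivity.
Qed.
Lemma mal_seq A (l : list (A * expr A)) :
  expr_mallocs (ESeq l) = flat_map (fun ae => expr_mallocs (snd ae)) l.
Proof.
  induction l as [|[a e] l IH]; [reflexivity|]. simpl in IH |- *. rewrite IH. reflexivity.
Qed.
Lemma calls_app A f (l : list (A * expr A)) :
  expr_calls (EApp f l) = f :: flat_map (fun ae => expr_calls (snd ae)) l.
Proof.
  induction l as [|[a e] l IH]; [reflexivity|]. simpl in IH |- *. injection IH as IH. rewrite IH. reflexivity.
Qed.
Lemma calls_seq A (l : list (A * expr A)) :
  expr_calls (ESeq l) = flat_map (fun ae => expr_calls (snd ae)) l.
Proof.
  induction l as [|[a e] l IH]; [reflexivity|]. simpl in IH |- *. rewrite IH. reflexivity.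
Qed.

Definition mal_ok (F : finType) (P : cprog F) p (l : list sname) : Prop :=
  forall s, In s l -> tok P p (TStructPtr s).
Definition call_ok (F : finType) (P : cprog F) p (l : list fname) : Prop :=
  forall f, In f l -> exists d, find_fun P f = Some d /\ feval p (fd_ann d) = true.

Definition Cn (F : finType) (P : cprog F) p G (e : cexpr F) T : Prop :=
  lc_ty (variant p P) G (var_expr p e) T /\ tok P p T /\
  mal_ok P p (expr_mallocs (var_expr p e)) /\ call_ok P p (expr_calls (var_expr p e)).

Lemma mal_app' F (P : cprog F) p l1 l2 : mal_ok P p l1 -> mal_ok P p l2 -> mal_ok P p (l1 ++ l2).
Proof. intros H1 H2 s Hs. apply in_app_or in Hs as [|]; auto. Qed.
Lemma call_app' F (P : cprog F) p l1 l2 : call_ok P p l1 -> call_ok P p l2 -> call_ok P p (l1 ++ l2).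
Proof. intros H1 H2 s Hs. apply in_app_or in Hs as [|]; auto. Qed.
Lemma mal_nil F (P : cprog F) p : mal_ok P p [].
Proof. intros s []. Qed.
Lemma call_nil F (P : cprog F) p : call_ok P p [].
Proof. intros s []. Qed.

Lemma occ_ret F (P : cprog F) d s :
  In d (p_funs P) -> fd_ret d = TStructPtr s -> In s (prog_structs P).
Proof.
  intros Hin Hr. unfold prog_structs. apply in_or_app; right. apply in_flat_map.
  exists d; split; auto. unfold fdef_structs. rewrite Hr. simpl. left; reflexivity.
Qed.
Lemma occ_par F (P : cprog F) d pd s :
  In d (p_funs P) -> In pd (fd_params d) -> fst (snd pd) = TStructPtr s -> In s (prog_structs P).
Proof.
  intros Hin Hp Hr. unfold prog_structs. apply in_or_app; right. apply in_flat_map.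
  exists d; split; auto. unfold fdef_structs. apply in_or_app; right. apply in_or_app; left.
  apply in_flat_map. exists pd. split; auto. rewrite Hr. simpl; auto.
Qed.
Lemma occ_mem F (P : cprog F) sd md s :
  In sd (p_structs P) -> In md (sd_mems sd) -> fst (snd md) = TStructPtr s -> In s (prog_structs P).
Proof.
  intros Hin Hp Hr. unfold prog_structs. apply in_or_app; left. apply in_flat_map.
  exists sd; split; auto. unfold sdef_structs. right.
  apply in_flat_map. exists md. split; auto. rewrite Hr. simpl; auto.
Qed.

Lemma tok_occ F (P : cprog F) p T :
  sane P -> (forall s, T = TStructPtr s -> In s (prog_structs P)) ->
  feval p (at_typ P T) = true -> tok P p T.
Proof.
  intros [Hs _] Ho. apply tok_of_at. intros s E. apply Hs. apply Ho; auto.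
Qed.

Lemma fiff_feval F (th a b : formula F) p :
  entails th (fiff a b) -> feval p th = true -> feval p a = feval p b.
Proof.
  intros H Ht. specialize (H p Ht). simpl in H.
  destruct (feval p a), (feval p b); simpl in H; auto.
Qed.

Lemma fun_facts F phi (P : cprog F) p d :
  ft_prog_ok phi P -> feval p phi = true -> In d (p_funs P) -> feval p (fd_ann d) = true ->
  tok P p (fd_ret d) /\
  (forall pd, In pd (fd_params d) -> feval p (fst pd) = true -> tok P p (fst (snd pd))) /\
  exists T', ft_ty P (map (fun pd => (snd (snd pd), (fst (snd pd), fst pd))) (fd_params d))
                   (FAnd phi (fd_ann d)) (fd_body d) T' /\ subty P T' (fd_ret d).
Proof.
  intros [Hs [_ [_ Hf]]] Hphi Hin Ha.
  rewrite Forall_forall in Hf. destruct (Hf d Hin) as [Hr [Hp Hb]].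
  have Hth : feval p (FAnd phi (fd_ann d)) = true by apply fand_true.
  split; [|split; [|exact Hb]].
  - apply tok_occ; [exact Hs| intros s E; eapply occ_ret; eauto | exact (Hr p Hth)].
  - intros pd Hpd Hpa. rewrite Forall_forall in Hp. specialize (Hp pd Hpd p Hth).
    simpl in Hp. rewrite Hpa in Hp. simpl in Hp.
    apply tok_occ; [exact Hs| intros s E; eapply occ_par; eauto | exact Hp].
Qed.

Lemma struct_facts F phi (P : cprog F) p sd :
  ft_prog_ok phi P -> feval p phi = true -> In sd (p_structs P) -> feval p (sd_ann sd) = true ->
  forall md, In md (sd_mems sd) -> feval p (fst md) = true -> tok P p (fst (snd md)).
Proof.
  intros [Hs [_ [Hst _]]] Hphi Hin Ha md Hmd Hma.
  rewrite Forall_forall in Hst. specialize (Hst sd Hin).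
  unfold ft_struct_ok in Hst. rewrite Forall_forall in Hst.
  have Hth : feval p (FAnd phi (sd_ann sd)) = true by apply fand_true.
  specialize (Hst md Hmd p Hth). simpl in Hst. rewrite Hma in Hst. simpl in Hst.
  apply tok_occ; [exact Hs| intros s E; eapply occ_mem; eauto | exact Hst].
Qed.

Lemma app_list F (P : cprog F) p G th :
  forall args Ts params,
  Forall2 (fun a T => Cn P p G (snd a) T) args Ts ->
  Forall2 (fun T (pd : formula F * (typ * pname)) => subty P T (fst (snd pd))) Ts params ->
  Forall2 (fun a (pd : formula F * (typ * pname)) => entails th (fiff (fst a) (fst pd))) args params ->
  feval p th = true ->
  (forall pd, In pd params -> feval p (fst pd) = true -> tok P p (fst (snd pd))) ->
  exists Ts', Forall2 (fun a T => lc_ty (variant p P) G (snd a) T) (vl p args) Ts' /\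
    Forall2 (fun T pd => subty (variant p P) T (fst (snd pd))) Ts' (var_decls p params) /\
    mal_ok P p (flat_map (fun ae => expr_mallocs (snd ae)) (vl p args)) /\
    call_ok P p (flat_map (fun ae => expr_calls (snd ae)) (vl p args)).
Proof.
  intros args Ts params H. revert params.
  induction H as [|[a e] T args Ts HC H IH]; intros params Hs Hi Hth Hp.
  - inversion Hs; subst. exists []. unfold vl, var_decls; simpl.
    split; [constructor|split; [constructor|split; [apply mal_nil|apply call_nil]]].
  - inversion Hs as [|T0 pd Ts0 params' Hs1 Hs2]; subst.
    inversion Hi as [|a0 pd0 args0 params0 Hi1 Hi2]; subst.
    destruct (IH params' Hs2 Hi2 Hth) as [Ts' [H1 [H2 [H3 H4]]]].
    { intros; apply Hp; simpl; auto. }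
    have Heq := fiff_feval Hi1 Hth. simpl in Heq.
    rewrite vl_cons.
    have Hvd : var_decls p (pd :: params') =
       if feval p (fst pd) then (tt, snd pd) :: var_decls p params' else var_decls p params'.
    { unfold var_decls; simpl. destruct (feval p (fst pd)); reflexivity. }
    rewrite Hvd -Heq.
    destruct (feval p a) eqn:Ea.
    + destruct HC as [C1 [C2 [C3 C4]]].
      exists (T :: Ts'). split; [constructor; auto|split; [constructor; auto|]].
      * simpl. apply subty_lift; auto. apply Hp; simpl; auto; congruence.
      * simpl. split; [apply mal_app'|apply call_app']; auto.
    + exists Ts'. auto.
Qed.

Definition typ_eq_dec (T1 T2 : typ) : {T1 = T2} + {T1 <> T2}.
Proof. decide equality. apply string_dec. Defined.

Lemma last_cons_ne (X : Type) (x : X) l d : l <> [] -> last (x :: l) d = last l d.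
Proof. destruct l; [congruence|reflexivity]. Qed.

Lemma Forall_last (X : Type) (Q : X -> Prop) l d : Forall Q l -> l <> [] -> Q (last l d).
Proof.
  induction 1 as [|x l Hx Hl IH]; intros Hne; [congruence|].
  destruct l; [exact Hx|]. rewrite last_cons_ne; [|discriminate]. apply IH. discriminate.
Qed.

Lemma seq_list F (P : cprog F) p G :
  forall es Ts,
  Forall2 (fun a T => feval p (fst a) = true -> Cn P p G (snd a) T) es Ts ->
  (forall i, i < length Ts -> nth i Ts TInt <> last Ts TInt -> feval p (never_last i es) = true) ->
  exists Ts', Forall2 (fun a T => lc_ty (variant p P) G (snd a) T) (vl p es) Ts' /\
    Forall (tok P p) Ts' /\
    (Ts' = [] \/ last Ts' TInt = last Ts TInt) /\
    (feval p (big_or (map fst es)) = true -> Ts' <> []) /\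
    (Ts = [] -> Ts' = []) /\
    mal_ok P p (flat_map (fun ae => expr_mallocs (snd ae)) (vl p es)) /\
    call_ok P p (flat_map (fun ae => expr_calls (snd ae)) (vl p es)).
Proof.
  intros es Ts H.
  induction H as [|[a e] T es Ts HC H IH]; intros Hnl.
  - exists []. unfold vl; simpl. repeat split; auto; try constructor; try apply mal_nil; try apply call_nil.
  - destruct IH as [Ts' [H1 [H2 [H3 [H4 [H5 [H6 H7]]]]]]].
    { intros i Hi Hne. apply (Hnl (S i)); simpl; [lia|].
      destruct Ts; [simpl in Hi; lia|]. exact Hne. }
    rewrite vl_cons. simpl in HC.
    destruct (feval p a) eqn:Ea.
    + destruct (HC (Logic.eq_refl _)) as [C1 [C2 [C3 C4]]].
      exists (T :: Ts'). split; [constructor; auto|split; [constructor; auto|]].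
      split; [|split; [intros _; discriminate|split; [intros Hx; discriminate Hx|]]].
      * right. destruct Ts' as [|T' Ts''].
        -- destruct Ts as [|T2 Ts2]; [reflexivity|].
           destruct (typ_eq_dec T (last (T2 :: Ts2) TInt)) as [E|E].
           ++ change (T = last (T2 :: Ts2) TInt). exact E.
           ++ exfalso. have Hn := Hnl 0. simpl in Hn.
              rewrite Ea in Hn. simpl in Hn. apply (H4 (Hn (Nat.lt_0_succ _) E)). reflexivity.
        -- destruct H3 as [H3|H3]; [discriminate|].
           destruct Ts as [|T2 Ts2]; [specialize (H5 (Logic.eq_refl _)); discriminate|].
           rewrite (last_cons_ne T); try discriminate. rewrite (last_cons_ne T); try discriminate.
           exact H3.
      * simpl. split; [apply mal_app'|apply call_app']; auto.
    + exists Ts'. split; auto. split; auto. split; [|split; [|split; [intros Hx; discriminate Hx|auto]]].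
      * destruct Ts' as [|T' Ts'']; [left; reflexivity|right].
        destruct H3 as [H3|H3]; [discriminate|].
        destruct Ts as [|T2 Ts2]; [specialize (H5 (Logic.eq_refl _)); discriminate|].
        rewrite (last_cons_ne T); try discriminate. exact H3.
      * simpl. rewrite Ea. simpl. exact H4.
Qed.

Lemma ft_sound F phi (P : cprog F) p D G
  (Hok : ft_prog_ok phi P) (Hphi : feval p phi = true)
  (HD : forall x T psi, In (x, (T, psi)) D -> feval p psi = true -> In (x, T) G /\ tok P p T) :
  forall th e T, ft_ty P D th e T -> feval p th = true -> Cn P p G e T.
Proof.
  fix IH 4. intros th e T H Hth. destruct H as
    [th n|th|th x T psi Hin Hps|th f d args Ts Hf Ha HA HS HI
    |th e0 s m sd a T m' H0 Hs Hm Ha|th e0 s m sd a T m' e1 T1 H0 Hs Hm Ha H1 Hsub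
    |th e0 e1 e2 T0 T1 T2 T3 H0 H1 H2 Hmax|th es Ts Hex HF Hne Hnl
    |th o e0 T0 H0 Hu|th o e1 e2 T1 T2 T3 H1 H2 Hmax Hb|th s sd Hs Ha|th e0 s H0].
  - split; [constructor|]. split; [exact I|split; [apply mal_nil|apply call_nil]].
  - split; [constructor|]. split; [exact I|split; [apply mal_nil|apply call_nil]].
  - destruct (HD x T psi Hin (Hps p Hth)) as [HG Ht].
    split; [constructor; exact HG|]. split; [exact Ht|split; [apply mal_nil|apply call_nil]].
  - have HA' := (fix go (l1 : list (formula F * cexpr F)) (l2 : list typ) (h : Forall2 (fun a T' => ft_ty P D th (snd a) T') l1 l2) {struct h}
        : Forall2 (fun a T' => Cn P p G (snd a) T') l1 l2 :=
        match h in Forall2 _ l1 l2 return Forall2 (fun a T' => Cn P p G (snd a) T') l1 l2 with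
        | Forall2_nil => Forall2_nil _
        | Forall2_cons _ _ _ _ r h' => @Forall2_cons _ _ (fun (a : formula F * cexpr F) T' => Cn P p G (snd a) T') _ _ _ _ (IH _ _ _ r Hth) (go _ _ h')
        end) _ _ HA.
    have Hdin : In d (p_funs P).
    { unfold find_fun in Hf. apply find_some in Hf as [Hf _]. exact Hf. }
    have Hda := Ha p Hth.
    destruct (fun_facts Hok Hphi Hdin Hda) as [Hret [Hpar _]].
    destruct (app_list HA' HS HI Hth Hpar) as [Ts' [H1 [H2 [H3 H4]]]].
    unfold Cn. rewrite var_app calls_app mal_app.
    split; [|split; [exact Hret|split; [exact H3|]]].
    + eapply (@T_app (variant p P) G f (var_fun p d)); [apply find_fun_var; auto|exact H1|exact H2].
    + intros g [<-|Hg]; [exists d; split; auto|exact (H4 g Hg)].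
  - destruct (IH _ _ _ H0 Hth) as [C1 [C2 [C3 C4]]].
    destruct C2 as [sd' [Hs' Ha']]. rewrite Hs in Hs'. injection Hs' as <-.
    have Hsin : In sd (p_structs P).
    { unfold find_struct in Hs. apply find_some in Hs as [Hs _]. exact Hs. }
    have Hmin : In (a, (T, m')) (sd_mems sd).
    { unfold find_mem in Hm. apply find_some in Hm as [Hm _]. exact Hm. }
    have Hap := Ha p Hth.
    split; [|split; [exact (struct_facts Hok Hphi Hsin Ha' Hmin Hap)|split; [exact C3|exact C4]]].
    simpl. eapply T_member; [exact C1|apply find_struct_var; eauto|eapply find_mem_var; [exact Hm|exact Hap]].
  - destruct (IH _ _ _ H0 Hth) as [C1 [C2 [C3 C4]]].
    destruct (IH _ _ _ H1 Hth) as [D1 [D2 [D3 D4]]].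
    destruct C2 as [sd' [Hs' Ha']]. rewrite Hs in Hs'. injection Hs' as <-.
    have Hsin : In sd (p_structs P).
    { unfold find_struct in Hs. apply find_some in Hs as [Hs _]. exact Hs. }
    have Hmin : In (a, (T, m')) (sd_mems sd).
    { unfold find_mem in Hm. apply find_some in Hm as [Hm _]. exact Hm. }
    have Hap := Ha p Hth.
    have HT := struct_facts Hok Hphi Hsin Ha' Hmin Hap.
    split; [|split; [exact HT|split; simpl; [apply mal_app'|apply call_app']; auto]].
    simpl. eapply T_assign; [exact C1|apply find_struct_var; eauto|eapply find_mem_var; [exact Hm|exact Hap]
      |exact D1|apply subty_lift; auto].
  - destruct (IH _ _ _ H0 Hth) as [C1 [C2 [C3 C4]]].
    destruct (IH _ _ _ H1 Hth) as [D1 [D2 [D3 D4]]].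
    destruct (IH _ _ _ H2 Hth) as [E1 [E2 [E3 E4]]].
    destruct (tmax_lift Hmax D2 E2) as [Hm Ht].
    split; [simpl; eapply T_cond; eauto|].
    split; [exact Ht|split; simpl; repeat first [apply mal_app'|apply call_app'|assumption]].
  - have HF' := (fix go (l1 : list (formula F * cexpr F)) (l2 : list typ) (h : Forall2 (fun a T => ft_ty P D (FAnd th (fst a)) (snd a) T) l1 l2)
        {struct h}
        : Forall2 (fun a T => feval p (fst a) = true -> Cn P p G (snd a) T) l1 l2 :=
        match h in Forall2 _ l1 l2
          return Forall2 (fun a T => feval p (fst a) = true -> Cn P p G (snd a) T) l1 l2 with
        | Forall2_nil => Forall2_nil _
        | Forall2_cons x _ _ _ r h' =>
            @Forall2_cons _ _ (fun (a : formula F * cexpr F) T => feval p (fst a) = true -> Cn P p G (snd a) T) _ _ _ _ (fun hx => IH _ _ _ r (fand_true Hth hx)) (go _ _ h')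
        end) _ _ HF.
    destruct (@seq_list F P p G es Ts HF') as [Ts' [H1 [H2 [H3 [H4 [H5 [H6 H7]]]]]]].
    { intros i Hi Hn. exact (Hnl i Hi Hn p Hth). }
    have Hne' : Ts' <> [] by apply H4; exact (Hex p Hth).
    have Hl : last Ts' TInt = last Ts TInt by destruct H3 as [H3|H3]; [contradiction|exact H3].
    unfold Cn. rewrite var_seq mal_seq calls_seq. rewrite -Hl.
    split; [constructor; auto|split; [apply Forall_last; auto|split; auto]].
  - destruct (IH _ _ _ H0 Hth) as [C1 [C2 [C3 C4]]].
    split; [simpl; eapply T_uop; eauto|split; [exact I|split; auto]].
  - destruct (IH _ _ _ H1 Hth) as [D1 [D2 [D3 D4]]].
    destruct (IH _ _ _ H2 Hth) as [E1 [E2 [E3 E4]]].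
    destruct (tmax_lift Hmax D2 E2) as [Hm Ht].
    split; [simpl; eapply T_bop; eauto|].
    split; [exact I|split; simpl; [apply mal_app'|apply call_app']; auto].
  - have Ht : tok P p (TStructPtr s) by exists sd; split; auto; exact (Ha p Hth).
    split; [simpl; constructor; apply tok_defined with (p := p); exact Ht|].
    split; [exact Ht|split; [|apply call_nil]].
    intros s' [<-|[]]; exact Ht.
  - destruct (IH _ _ _ H0 Hth) as [C1 [C2 [C3 C4]]].
    split; [simpl; eapply T_mfree; eauto|split; [exact I|split; auto]].
Qed.

Lemma NoDup_map_filter (X Y : Type) (f : X -> Y) (q : X -> bool) l :
  NoDup (map f l) -> NoDup (map f (filter q l)).
Proof.
  induction l as [|a l IH]; simpl; intros H; auto.
  inversion H as [|b c Hni Hnd]; subst.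
  destruct (q a); simpl; auto. constructor; auto.
  intros Hin. apply Hni. apply in_map_iff in Hin as [y [Hy Hin]].
  apply filter_In in Hin as [Hin _]. rewrite -Hy. apply in_map; auto.
Qed.

Lemma in_var_decl F p X (l : list (formula F * X)) y :
  In y (var_decls p l) -> exists x, In x l /\ feval p (fst x) = true /\ y = (tt, snd x).
Proof.
  unfold var_decls. intros H. apply in_map_iff in H as [x [Hx Hin]].
  apply filter_In in Hin as [Hin Hf]. exists x; auto.
Qed.

Theorem theorem4 (F : finType) (phi : formula F) (P : cprog F) (p : F -> bool) :
  names_ok P ->
  feval p phi = true ->
  ft_prog_ok phi P ->
  names_ok (variant p P) /\ lc_prog_ok (variant p P).
Proof.
  intros [N1 [N2 [N3 N4]]] Hphi Hok.
  have Hok' := Hok. destruct Hok' as [Hsane [[dm [Hdm Hdma]] [Hst Hfn]]].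
  have Hfun : forall d, In d (p_funs P) -> feval p (fd_ann d) = true ->
      lc_fun_ok (variant p P) (var_fun p d) /\
      mal_ok P p (expr_mallocs (var_expr p (fd_body d))) /\
      call_ok P p (expr_calls (var_expr p (fd_body d))).
  { intros d Hin Ha. destruct (fun_facts Hok Hphi Hin Ha) as [Hret [Hpar [T' [HT Hsub]]]].
    have HD : forall x T psi,
        In (x, (T, psi)) (map (fun pd => (snd (snd pd), (fst (snd pd), fst pd))) (fd_params d)) ->
        feval p psi = true ->
        In (x, T) (map (fun pd => (snd (snd pd), fst (snd pd))) (var_decls p (fd_params d)))
        /\ tok P p T.
    { intros x T psi Hi Hpsi. apply in_map_iff in Hi as [pd [Hpd Hi]].
      injection Hpd as <- <- <-. split; [|apply Hpar; auto].
      apply in_map_iff. exists (tt, snd pd). split; [reflexivity|].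
      unfold var_decls. apply in_map_iff. exists pd. split; auto. apply filter_In; auto. }
    destruct (ft_sound Hok Hphi HD HT (fand_true Hphi Ha)) as [C1 [C2 [C3 C4]]].
    split; [|split; auto].
    exists T'. split; [exact C1|]. apply subty_lift; auto. }
  split.
  - split; [|split; [|split]]; simpl.
    + rewrite map_map. apply NoDup_map_filter. exact N1.
    + rewrite map_map. apply NoDup_map_filter. exact N2.
    + rewrite Forall_forall. intros sd' Hin. apply in_map_iff in Hin as [sd [<- Hin]].
      apply filter_In in Hin as [Hin _]. rewrite Forall_forall in N3.
      simpl. unfold var_decls. rewrite map_map. apply NoDup_map_filter. exact (N3 sd Hin).
    + rewrite Forall_forall. intros d' Hin. apply in_map_iff in Hin as [d [<- Hin]].
      apply filter_In in Hin as [Hin _]. rewrite Forall_forall in N4.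
      simpl. unfold var_decls. rewrite map_map. apply NoDup_map_filter. exact (N4 d Hin).
  - split.
    + split; [|split].
      * intros s Hs. unfold prog_structs in Hs. apply in_app_or in Hs as [Hs|Hs].
        -- apply in_flat_map in Hs as [sd' [Hin Hs]].
           apply in_map_iff in Hin as [sd [<- Hin]]. apply filter_In in Hin as [Hin Ha].
           destruct Hs as [Hs|Hs].
           ++ unfold struct_defined. simpl. rewrite -Hs. apply in_map.
              apply in_map. apply filter_In; auto.
           ++ apply in_flat_map in Hs as [md' [Hmd Hs]].
              apply in_var_decl in Hmd as [md [Hmd [Hma ->]]].
              apply tok_defined. simpl in Hs.
              have Ht := struct_facts Hok Hphi Hin Ha Hmd Hma.
              destruct (fst (snd md)); simpl in Hs; try contradiction.
              destruct Hs as [<-|[]]. exact Ht.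
        -- apply in_flat_map in Hs as [d' [Hin Hs]].
           apply in_map_iff in Hin as [d [<- Hin]]. apply filter_In in Hin as [Hin Ha].
           destruct (fun_facts Hok Hphi Hin Ha) as [Hret [Hpar _]].
           destruct (Hfun d Hin Ha) as [_ [Hmal _]].
           apply tok_defined. unfold fdef_structs in Hs. simpl in Hs.
           apply in_app_or in Hs as [Hs|Hs].
           ++ destruct (fd_ret d); simpl in Hs; try contradiction.
              destruct Hs as [<-|[]]. exact Hret.
           ++ apply in_app_or in Hs as [Hs|Hs]; [|exact (Hmal s Hs)].
              apply in_flat_map in Hs as [pd' [Hpd Hs]].
              apply in_var_decl in Hpd as [pd [Hpd [Hpa ->]]].
              have Ht := Hpar pd Hpd Hpa. simpl in Hs.
              destruct (fst (snd pd)); simpl in Hs; try contradiction.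
              destruct Hs as [<-|[]]. exact Ht.
      * intros f Hf. unfold prog_calls in Hf. apply in_flat_map in Hf as [d' [Hin Hf]].
        apply in_map_iff in Hin as [d [<- Hin]]. apply filter_In in Hin as [Hin Ha].
        destruct Hf as [Hf|Hf].
        -- unfold fun_defined. simpl. rewrite -Hf. apply in_map. apply in_map.
           apply filter_In; auto.
        -- destruct (Hfun d Hin Ha) as [_ [_ Hcall]].
           destruct (Hcall f Hf) as [d0 [Hd0 Ha0]].
           have Hv := find_fun_var Hd0 Ha0. unfold find_fun in Hv.
           apply find_some in Hv as [Hv Hn]. apply String.eqb_eq in Hn.
           unfold fun_defined. rewrite -Hn. apply in_map. exact Hv.
      * destruct Hsane as [_ [_ [d0 [Hd0 [Hr Hp]]]]].
        rewrite Hdm in Hd0. injection Hd0 as <-.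
        exists (var_fun p dm). split; [apply find_fun_var; auto; rewrite Hdma; reflexivity|].
        simpl. rewrite Hp. split; auto.
    + rewrite Forall_forall. intros d' Hin. apply in_map_iff in Hin as [d [<- Hin]].
      apply filter_In in Hin as [Hin Ha]. exact (proj1 (Hfun d Hin Ha)).
Qed.
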